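(* Let $m=2^p$ and let $r_1,\dots,r_m\in\{1,\dots,m\}$ (repetitions allowed). Let $A$ be the $m\times m$ matrix whose $i$-th row is the $r_i$-th row of $H(m)$. If $b(r_1-1)\oplus b(r_2-1)\oplus\dots\oplus b(r_m-1)\neq 0$, then $\mathrm{perm}\,A=0$.
   Context: For $m=2^p$, the Sylvester matrix $H(m)$ is defined recursively by $H(1)=[1]$ and $H(2^p)=\begin{bmatrix}H(2^{p-1})&H(2^{p-1})\\ H(2^{p-1})&-H(2^{p-1})\end{bmatrix}$, rows and columns indexed $1,\dots,m$; equivalently $[H(m)]_{i,j}=(-1)^{b(i-1)\odot b(j-1)}$. Here $b(x)$ denotes the $p$-bit binary representation of $x\in\{0,\dots,m-1\}$, $\odot$ is the bitwise dot product, and $\oplus$ is bitwise XOR. $\mathrm{perm}\,A=\sum_{\sigma\in S_m}\prod_{i=1}^m a_{i,\sigma(i)}$. *)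

(* Defs.v *)
From HB Require Import structures.
From mathcomp Require Import all_boot all_order all_algebra all_fingroup.
Set Implicit Arguments. Unset Strict Implicit. Unset Printing Implicit Defensive.
Import GRing.Theory.
Local Open Scope ring_scope.

Definition bin (p x : nat) : {ffun 'I_p -> bool} :=
  [ffun k : 'I_p => odd (x %/ 2 ^ k)].

Definition bxor (p : nat) (u v : {ffun 'I_p -> bool}) : {ffun 'I_p -> bool} :=
  [ffun k => u k (+) v k].

Definition bzero (p : nat) : {ffun 'I_p -> bool} := [ffun _ => false].

Definition bdot (p : nat) (u v : {ffun 'I_p -> bool}) : bool :=
  \big[addb/false]_(k < p) (u k && v k).

(* Sylvester matrix H(2^p), 0-indexed: entry (i,j) (i,j in 0..m-1) corresponds
   to the paper's entry (i+1, j+1) = (-1)^{b(i) . b(j)}. *)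
Definition sylvester (p : nat) : 'M[int]_(2 ^ p) :=
  \matrix_(i, j) ((-1) ^+ bdot (bin p i) (bin p j)).

Definition permanent (R : comNzRingType) (n : nat) (A : 'M[R]_n) : R :=
  \sum_(s : 'S_n) \prod_(i < n) A i (s i).

(* Main.v *)
Require Import Defs.
From HB Require Import structures.
From mathcomp Require Import all_boot all_order all_algebra all_fingroup.
From mathcomp Require Import zify.

Lemma flip0 (j k : nat) : ~~ odd (j %/ 2 ^ k) -> forall i,
  odd ((j + 2 ^ k) %/ 2 ^ i) = odd (j %/ 2 ^ i) (+) (i == k).
Proof.
move=> hj i; case: (leqP i k) => hik.
  rewrite -(subnK hik) expnD divnDMl ?expn_gt0 // oddD oddX orbF.
  congr (_ (+) _); apply/eqP/eqP; lia.
rewrite gtn_eqF // addbF.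
have -> : 2 ^ i = 2 ^ k * 2 * 2 ^ (i - k.+1).
  by rewrite -expnSr -expnD; congr (2 ^ _); lia.
rewrite !divnMA.
have -> : (j + 2 ^ k) %/ 2 ^ k = j %/ 2 ^ k + 1.
  by rewrite -[X in _ + X](mul1n (2 ^ k)) divnDMl ?expn_gt0.
congr (odd (_ %/ _)).
move: hj; set q := j %/ 2 ^ k => hj.
have : q %% 2 = 0 by rewrite modn2; case: (odd q) hj.
lia.
Qed.

Lemma lt0 (p k j : nat) : k < p -> j < 2 ^ p -> ~~ odd (j %/ 2 ^ k) ->
  j + 2 ^ k < 2 ^ p.
Proof.
move=> hk hj ho.
have e : 2 ^ p = 2 ^ (p - k.+1) * 2 * 2 ^ k.
  by rewrite -expnSr -expnD; congr (2 ^ _); lia.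
have a0 : 0 < 2 ^ k by rewrite expn_gt0.
move: hj; rewrite e => hj.
have hq : j %/ 2 ^ k < 2 ^ (p - k.+1) * 2 by rewrite ltn_divLR.
have hd := divn_eq j (2 ^ k).
have hm := ltn_pmod j a0.
have : (j %/ 2 ^ k) %% 2 = 0 by rewrite modn2; case: (odd _) ho.
move: hq hd hm a0; set q := j %/ 2 ^ k; set a := 2 ^ k; set B := 2 ^ (p - k.+1).
set r := j %% a => *.
have [h eh] : exists h, q = h * 2 by exists (q %/ 2); lia.
have hB : h < B by lia.
have : (h.+1) * a <= B * a by rewrite leq_mul2r hB orbT.
nia.
Qed.

Definition fn (k j : nat) := if odd (j %/ 2 ^ k) then j - 2 ^ k else j + 2 ^ k.

Lemma ge_of_odd {j k} : odd (j %/ 2 ^ k) -> 2 ^ k <= j.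
Proof.
move=> h; rewrite -divn_gt0 ?expn_gt0 //; case: (j %/ 2 ^ k) h => //.
Qed.

Lemma odd_sub {j k} : odd (j %/ 2 ^ k) -> ~~ odd ((j - 2 ^ k) %/ 2 ^ k).
Proof.
move=> h; have hj := ge_of_odd h.
move: h; rewrite -{1}(subnK hj) -[X in _ + X](mul1n (2 ^ k)) divnDMl ?expn_gt0 //.
by rewrite oddD addbT.
Qed.

Lemma fn_bits k j i : odd (fn k j %/ 2 ^ i) = odd (j %/ 2 ^ i) (+) (i == k).
Proof.
rewrite /fn; case: ifP => h; last by rewrite flip0 // h.
have hj := ge_of_odd h.
rewrite -{2}(subnK hj) flip0 ?odd_sub //.
by rewrite -addbA addbb addbF.
Qed.

Lemma fn_inv k j : fn k (fn k j) = j.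
Proof.
have hb := fn_bits k j k; rewrite eqxx addbT in hb.
rewrite {1}/fn hb; case: (boolP (odd (j %/ 2 ^ k))) => h /=.
  rewrite /fn h /=; have := ge_of_odd h; lia.
by rewrite /fn (negbTE h); lia.
Qed.

Lemma fn_lt {p k j} : k < p -> j < 2 ^ p -> fn k j < 2 ^ p.
Proof.
move=> hk hj; rewrite /fn; case: ifP => h.
  exact: leq_ltn_trans (leq_subr _ _) hj.
by apply: lt0 => //; rewrite h.
Qed.

Local Open Scope ring_scope.
Import GRing.Theory.

Lemma andb_xorr (a b c : bool) : a && (b (+) c) = (a && b) (+) (a && c).
Proof. by case: a; case: b; case: c. Qed.

Theorem proposition5 (p : nat) (r : 'I_(2 ^ p) -> 'I_(2 ^ p)) :
  \big[@bxor p/bzero p]_(i < 2 ^ p) bin p (r i) != bzero p ->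
  permanent (\matrix_(i, j) sylvester p (r i) j) = 0.
Proof.
set U := \big[@bxor p/bzero p]_(i < 2 ^ p) bin p (r i) => HU.
have [k0 hk0] : exists k0 : 'I_p, U k0.
  case: (pickP (fun k => U k)) => [k0 hk0 | H0]; first by exists k0.
  exfalso; move/eqP: HU; apply; apply/ffunP => i; rewrite ffunE; exact: H0 i.
pose tauf (j : 'I_(2 ^ p)) : 'I_(2 ^ p) := Ordinal (fn_lt (ltn_ord k0) (ltn_ord j)).
have tauK : cancel tauf tauf by move=> j; apply: val_inj; rewrite /= fn_inv.
pose tau := perm (can_inj tauK).
have bin_tau : forall j, bin p (tauf j) = [ffun i => bin p j i (+) (i == k0)].
  by move=> j; apply/ffunP => i; rewrite !ffunE /= fn_bits.
have bdot_tau : forall u j, bdot u (bin p (tauf j)) = bdot u (bin p j) (+) u k0.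
  move=> u j; rewrite /bdot bin_tau.
  under eq_bigr do rewrite ffunE andb_xorr.
  rewrite big_split /=; congr (_ (+) _).
  rewrite (bigD1 k0) //= eqxx andbT big1 ?addbF // => i /negbTE ->.
  by rewrite andbF.
have prodU : \prod_(i < 2 ^ p) ((-1) ^+ bin p (r i) k0 : int) = -1.
  rewrite -(big_morph (fun b : bool => ((-1) ^+ b : int)) (@signr_addb _) (expr0 (-1) : ((-1) ^+ false : int) = 1)).
  have -> : \big[addb/false]_(i < 2 ^ p) bin p (r i) k0 = U k0.
    rewrite /U (big_morph (fun u : {ffun 'I_p -> bool} => u k0)
                 (fun u v => ffunE _ _ : bxor u v k0 = u k0 (+) v k0) (ffunE _ _)) //.
  by rewrite hk0 expr1.
set S := permanent _.
have e : S = - S.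
  rewrite {1}/S /permanent (reindex_inj (mulIg tau)) /= -sumrN.
  apply: eq_bigr => s _.
  under eq_bigr do rewrite !mxE permM permE bdot_tau signr_addb.
  rewrite big_split /= prodU mulrN1 /S; congr (- _).
  by apply: eq_bigr => i _; rewrite !mxE.
lia.
Qed.
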